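(* Let $G$ be a finite $p$-group with $Z(G)$ cyclic, let $\alpha\in Z^2(G,\mathbb{C}^\times)$ and let $\rho$ be an irreducible $\alpha$-representation of $G$. Then $\rho$ is faithful if and only if, for any (equivalently, some) non-trivial subgroup $A\le Z(G)$, the restriction $\rho|_A$ is faithful, i.e. no $1\ne a\in A$ has $\rho(a)$ a scalar matrix.
   Context: An $\alpha$-representation is a map $\rho:G\to\mathrm{GL}(V)$ with $\rho(1)=1$ and $\rho(g)\rho(h)=\alpha(g,h)\rho(gh)$; it is faithful if the only $g\in G$ with $\rho(g)$ scalar is $g=1$. *)

(* Defs.v *)
From HB Require Import structures.
From mathcomp Require Import all_boot all_order all_algebra all_fingroup all_solvable all_field.
Set Implicit Arguments. Unset Strict Implicit. Unset Printing Implicit Defensive.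
Import GRing.Theory.
Local Open Scope group_scope.
Local Open Scope ring_scope.

(* A 2-cocycle of G with values in C^x (trivial action), modelled by algC. *)
Definition cocycle2 (gT : finGroupType) (G : {set gT}) (alpha : gT -> gT -> algC) : Prop :=
  (forall g h, g \in G -> h \in G -> alpha g h != 0%R) /\
  (forall g h k, g \in G -> h \in G -> k \in G ->
     (alpha g h * alpha (g * h)%g k = alpha h k * alpha g (h * k)%g)%R).

Definition alpha_rep (gT : finGroupType) (G : {set gT}) (alpha : gT -> gT -> algC)
  (n : nat) (rho : gT -> 'M[algC]_n) : Prop :=
  rho 1%g = 1%:M /\
  (forall g h, g \in G -> h \in G -> rho g *m rho h = alpha g h *: rho (g * h)%g).

Definition alpha_rep_irr (gT : finGroupType) (G : {set gT})
  (n : nat) (rho : gT -> 'M[algC]_n) : Prop :=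
  (0 < n)%N /\
  forall m (U : 'M[algC]_(m, n)),
    (forall g, g \in G -> (U *m rho g <= U)%MS) -> (U == 0)%R || row_full U.

Definition faithful_on (gT : finGroupType) (A : {set gT})
  (n : nat) (rho : gT -> 'M[algC]_n) : Prop :=
  forall a, a \in A -> is_scalar_mx (rho a) -> a = 1%g.

(* Main.v *)
Require Import Defs.
From mathcomp Require Import all_boot all_order all_algebra all_fingroup all_solvable all_field.
Local Open Scope group_scope.
Import GRing.Theory.

Lemma scal_of_scale n (c x : algC) (M : 'M[algC]_n) :
  x != 0%R -> (x *: M = c%:M)%R -> is_scalar_mx M.
Proof.
move=> nz E; apply/is_scalar_mxP; exists (x^-1 * c)%R.
by rewrite -scale_scalar_mx -E scalerA mulVf // scale1r.
Qed.

Lemma key (gT : finGroupType) (G : {group gT}) (p : nat)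
  (alpha : gT -> gT -> algC) (n : nat) (rho : gT -> 'M[algC]_n) (A : {group gT}) :
  prime p -> p.-group G -> cyclic 'Z(G) ->
  cocycle2 G alpha -> alpha_rep G alpha rho ->
  A \subset 'Z(G) -> A :!=: 1 -> faithful_on A rho -> faithful_on G rho.
Proof.
move=> pr pG cZ [anz _] [r1 rM] sAZ ntA fA.
pose K := [set g in G | is_scalar_mx (rho g)].
have gK : group_set K.
  apply/group_setP; split.
    by rewrite inE group1 r1 scalar_mx_is_scalar.
  move=> g h; rewrite !inE => /andP[gG /is_scalar_mxP[a ea]] /andP[hG /is_scalar_mxP[b eb]].
  rewrite groupM //=; apply: (@scal_of_scale _ (a * b)%R (alpha g h)); first exact: anz.
  by rewrite -rM // ea eb -scalar_mxM.
pose KG := Group gK.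
have sKG : KG \subset G by apply/subsetP => g; rewrite inE => /andP[].
have conjK : forall x g, x \in G -> g \in K -> g ^ x \in K.
  move=> x g xG; rewrite !inE => /andP[gG /is_scalar_mxP[a ea]].
  rewrite groupJ //= conjgE.
  have xiG : x^-1 \in G by rewrite groupV.
  have gxG : g * x \in G by rewrite groupM.
  apply: (@scal_of_scale _ (a * alpha (x^-1)%g x)%R (alpha g x * alpha (x^-1)%g (g * x)%g)%R).
    by rewrite mulf_neq0 // anz.
  rewrite -scalerA -rM // scalemxAr -rM // ea mul_scalar_mx -scalemxAr rM //.
  by rewrite mulVg r1 scalerA scale_scalar_mx mulr1.
have nK : KG <| G.
  apply/normalP; split => // x xG; apply/eqP; rewrite eqEcard cardJg leqnn andbT.
  apply/subsetP => y; rewrite mem_conjg => yK.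
  by rewrite -(conjgKV x y); apply: conjK.
have K1 : KG :==: 1.
  apply: contraT => ntK.
  have := meet_center_nil (pgroup_nil pG) nK ntK.
  set H := (KG :&: 'Z(G))%G => ntH.
  have sHG : H \subset G by rewrite subIset // sKG.
  have [_ dH _] := pgroup_pdiv (pgroupS sHG pG) ntH.
  have sAG : A \subset G by apply: subset_trans sAZ (center_sub G).
  have [_ dA _] := pgroup_pdiv (pgroupS sAG pG) ntA.
  have [x xH ox] := Cauchy pr dH.
  have [y yA oy] := Cauchy pr dA.
  have xZ : x \in 'Z(G) by move: xH; rewrite inE => /andP[].
  have xK : x \in K by move: xH; rewrite inE => /andP[].
  have yZ : y \in 'Z(G) by apply: (subsetP sAZ).
  have exy : <[x]> = <[y]>.
    apply/eqP; rewrite (eq_subG_cyclic (H:=<[x]>%G) (K:=<[y]>%G) cZ) ?cycle_subG //.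
    by rewrite /= -!orderE ox oy.
  have xA : x \in A.
    apply: (subsetP (_ : <[y]> \subset A)); first by rewrite cycle_subG.
    by rewrite -exy cycle_id.
  have x1 : x = 1.
    by apply: fA => //; move: xK; rewrite inE => /andP[].
  by move: ox; rewrite x1 order1 => p1; move: pr; rewrite -p1.
move=> a aG sa; have : a \in KG by rewrite inE aG.
by rewrite (eqP K1) inE => /eqP.
Qed.

Theorem corollary2p8 (gT : finGroupType) (G : {group gT}) (p : nat)
  (alpha : gT -> gT -> algC) (n : nat) (rho : gT -> 'M[algC]_n) :
  prime p -> p.-group G -> cyclic 'Z(G) ->
  cocycle2 G alpha -> alpha_rep G alpha rho -> alpha_rep_irr G rho ->
  (faithful_on G rho <->
     (forall A : {group gT}, A \subset 'Z(G) -> A :!=: 1 -> faithful_on A rho)) /\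
  (G :!=: 1 ->
   (faithful_on G rho <->
     (exists A : {group gT}, [/\ A \subset 'Z(G), A :!=: 1 & faithful_on A rho]))).
Proof.
move=> pr pG cZ co ar _.
have down : faithful_on G rho -> forall A : {group gT}, A \subset 'Z(G) -> faithful_on A rho.
  move=> fG A sAZ a aA; apply: fG.
  by apply: (subsetP (subset_trans sAZ (center_sub G))).
have ntZ : G :!=: 1 -> 'Z(G) :!=: 1 by move=> ntG; by rewrite center_nil_eq1 // (pgroup_nil pG).
split; last first.
  move=> ntG; split.
    by move=> fG; exists 'Z(G)%G; split => //; [exact: ntZ | exact: down].
  by case=> A [sAZ ntA fA]; exact: (@key _ G p alpha n rho _ pr pG cZ co ar sAZ ntA fA).
split; first by move=> fG A sAZ _; apply: down.
move=> H; case: (eqVneq (G : {set gT}) 1) => [G1|ntG].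
  by move=> a; rewrite G1 inE => /eqP.
have sZZ : 'Z(G)%G \subset 'Z(G) by apply: subxx.
exact: (@key _ G p alpha n rho _ pr pG cZ co ar sZZ (ntZ ntG) (H 'Z(G)%G sZZ (ntZ ntG))).
Qed.
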